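(* Let $D$ be a finite distributive lattice. Then $D$ is fully chain-representable if and only if $D$ is planar and $D$ has at most one join-reducible coatom.
   Context: For a finite lattice $L$, $J(L)$ is the set of nonzero join-irreducible elements and $J^+(L)=J(L)\cup\{0_L,1_L\}$. A $J(D)$-colored chain is a triple $(C,\sigma,D)$ where $C$ is a finite chain, $D$ is a finite distributive lattice and $\sigma\colon\mathrm{Prime}(C)\to J(D)$ is a surjective map from the set $\mathrm{Prime}(C)$ of prime intervals (covering pairs $[x,y]$, $x\prec y$) of $C$ onto $J(D)$. For an interval $I$ of $C$, the element represented by $I$ is $\mathrm{rep}(I)=\bigvee_{\mathfrak p\in\mathrm{Prime}(I)}\sigma(\mathfrak p)$ (join in $D$; the empty join is $0_D$), and $\mathrm{Rep}(C,\sigma,D)=\{\mathrm{rep}(I): I \text{ an interval of } C\}$. For $Q\subseteq D$, the inclusion $Q\subseteq D$ is chain-representable if $Q=\mathrm{Rep}(C,\sigma,D)$ for some $J(D)$-colored chain $(C,\sigma,D)$ ($C$ need not be a subchain of $D$). $D$ is fully chain-representable if for every $Q$ with $J^+(D)\subseteq Q\subseteq D$ the inclusion $Q\subseteq D$ is chain-representable. A lattice is planar if it is finite and has a planar Hasse diagram. *)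

(* Defs.v *)
From Stdlib Require Import Reals.
From HB Require Import structures.
From mathcomp Require Import all_boot all_order.
Set Implicit Arguments.
Unset Strict Implicit.
Unset Printing Implicit Defensive.
Import Order.TTheory.
Local Open Scope order_scope.

Section Lat.
Context {disp : Order.disp_t} {L : finTBLatticeType disp}.

Definition join_irr (x : L) : bool :=
  (x != \bot) && [forall y : L, forall z : L, (x == y `|` z) ==> ((x == y) || (x == z))].

Definition Jset : {set L} := [set x | join_irr x].

Definition Jplus : {set L} := \bot |: (\top |: Jset).

Definition join_red (x : L) : bool :=
  [exists y : L, exists z : L, [&& y < x, z < x & x == y `|` z]].

Definition covers (x y : L) : bool :=
  (x < y) && [forall z : L, ~~ ((x < z) && (z < y))].

Definition coatom (c : L) : bool := covers c \top.

(** The finite chain C is modelled (up to isomorphism) as 0 < 1 < ... < n;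
    its prime intervals are [k, k+1], indexed by k : 'I_n. *)
(** element represented by the interval [i, j] (i <= j <= n) *)
Definition rep (n : nat) (sigma : 'I_n -> L) (i j : nat) : L :=
  \join_(k < n | (i <= k)%N && (k < j)%N) sigma k.

Definition Rep (n : nat) (sigma : 'I_n -> L) : {set L} :=
  [set x | [exists i : 'I_n.+1, exists j : 'I_n.+1,
              ((i <= j)%N) && (x == rep sigma i j)]].

Definition coloring (n : nat) (sigma : 'I_n -> L) : Prop :=
  (forall k, sigma k \in Jset) /\ (forall x, x \in Jset -> exists k, sigma k = x).

Definition chain_representable (Q : {set L}) : Prop :=
  exists (n : nat) (sigma : 'I_n -> L), coloring sigma /\ Q = Rep sigma.

Definition fully_chain_representable : Prop :=
  forall Q : {set L}, Jplus \subset Q -> chain_representable Q.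

Definition segpt (P Q : R * R) (t : R) : R * R :=
  (Rplus (Rmult (Rminus R1 t) (fst P)) (Rmult t (fst Q)),
   Rplus (Rmult (Rminus R1 t) (snd P)) (Rmult t (snd Q))).

Definition in01 (t : R) : Prop := Rle R0 t /\ Rle t R1.

(** A planar (straight-line, upward) drawing of the Hasse diagram. *)
Definition planar_drawing (p : L -> R * R) : Prop :=
  (forall x y, p x = p y -> x = y) /\
  (forall x y, x < y -> Rlt (snd (p x)) (snd (p y))) /\
  (forall v a b t, covers a b -> in01 t -> p v = segpt (p a) (p b) t ->
     v = a \/ v = b) /\
  (forall a b c d t s, covers a b -> covers c d -> in01 t -> in01 s ->
     segpt (p a) (p b) t = segpt (p c) (p d) s ->
     (a = c /\ b = d) \/
     exists v, (v = a \/ v = b) /\ (v = c \/ v = d) /\ segpt (p a) (p b) t = p v).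

Definition planar : Prop := exists p : L -> R * R, planar_drawing p.

End Lat.

(* Main.v *)
Require Import Defs.
From Stdlib Require Import Reals Lra Lia.
From HB Require Import structures.
From mathcomp Require Import all_boot all_order zify.
Import Order.TTheory.
Local Open Scope order_scope.

Section Geo.
Local Open Scope R_scope.

Definition mx (a y : R) : R := (a + y + Rabs (y - a)) / 2.
Definition mn (b y : R) : R := (b + y - Rabs (y - b)) / 2.
Definition cl (a b y : R) : R := mn b (mx a y).

Lemma cpt_plus f g x : continuity_pt f x -> continuity_pt g x -> continuity_pt (fun y => f y + g y) x.
Proof. exact: continuity_pt_plus. Qed.
Lemma cpt_minus f g x : continuity_pt f x -> continuity_pt g x -> continuity_pt (fun y => f y - g y) x.
Proof. exact: continuity_pt_minus. Qed.
Lemma cpt_mult f g x : continuity_pt f x -> continuity_pt g x -> continuity_pt (fun y => f y * g y) x.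
Proof. exact: continuity_pt_mult. Qed.
Lemma cpt_div2 f x : continuity_pt f x -> continuity_pt (fun y => f y / 2) x.
Proof. move=> H; apply: (continuity_pt_mult f (fun _ => /2)) => //. exact: continuity_pt_const. Qed.
Lemma cpt_const (c : R) x : continuity_pt (fun _ => c) x.
Proof. exact: continuity_pt_const. Qed.
Lemma cpt_id x : continuity_pt (fun y => y) x.
Proof. exact: (derivable_continuous _ derivable_id). Qed.
Lemma cpt_abs f x : continuity_pt f x -> continuity_pt (fun y => Rabs (f y)) x.
Proof. move=> H; apply: (continuity_pt_comp f Rabs) => //; exact: Rcontinuity_abs. Qed.

Lemma cpt_cl a b f x : continuity_pt f x -> continuity_pt (fun y => cl a b (f y)) x.
Proof.
move=> H; rewrite /cl /mn /mx.
repeat first [ apply: cpt_div2 | apply: cpt_minus | apply: cpt_plus | apply: cpt_abs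
             | apply: cpt_const | exact: H ].
Qed.

Lemma cl_in a b y : a <= y <= b -> cl a b y = y.
Proof.
move=> [H1 H2]; rewrite /cl /mn /mx.
rewrite (Rabs_pos_eq (y - a)); last lra.
rewrite (Rabs_left1 ((a + y + (y - a)) / 2 - b)); lra.
Qed.
Lemma cl_lo a b y : y <= a -> a <= b -> cl a b y = a.
Proof.
move=> H1 H2; rewrite /cl /mn /mx.
rewrite (Rabs_left1 (y - a)); last lra.
rewrite (Rabs_left1 ((a + y + - (y - a)) / 2 - b)); lra.
Qed.
Lemma cl_hi a b y : a <= b -> b <= y -> cl a b y = b.
Proof.
move=> H1 H2; rewrite /cl /mn /mx.
rewrite (Rabs_pos_eq (y - a)); last lra.
rewrite (Rabs_pos_eq ((a + y + (y - a)) / 2 - b)); lra.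
Qed.

Definition slope (P Q : R * R) : R := (fst Q - fst P) / (snd Q - snd P).
Definition pl (P0 P1 P2 P3 : R * R) (y : R) : R :=
  fst P0 + slope P0 P1 * (cl (snd P0) (snd P1) y - snd P0)
         + slope P1 P2 * (cl (snd P1) (snd P2) y - snd P1)
         + slope P2 P3 * (cl (snd P2) (snd P3) y - snd P2).

Lemma pl_cont P0 P1 P2 P3 : continuity (pl P0 P1 P2 P3).
Proof.
move=> x; rewrite /pl.
repeat first [ apply: cpt_cl; exact: cpt_id | apply: cpt_minus | apply: cpt_plus | apply: cpt_mult
             | apply: cpt_const ].
Qed.

Section PL.
Variables (P0 P1 P2 P3 : R * R).
Hypotheses (h01 : snd P0 < snd P1) (h12 : snd P1 < snd P2) (h23 : snd P2 < snd P3).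

Lemma pl_seg1 y : snd P0 <= y <= snd P1 -> pl P0 P1 P2 P3 y = fst P0 + slope P0 P1 * (y - snd P0).
Proof.
move=> Hy; rewrite /pl (cl_in (snd P0) (snd P1) y) // (cl_lo (snd P1) (snd P2) y) ?(cl_lo (snd P2) (snd P3) y); lra.
Qed.

Lemma pl_seg2 y : snd P1 <= y <= snd P2 -> pl P0 P1 P2 P3 y = fst P1 + slope P1 P2 * (y - snd P1).
Proof.
move=> Hy; rewrite /pl (cl_hi (snd P0) (snd P1) y) ?(cl_in (snd P1) (snd P2) y) ?(cl_lo (snd P2) (snd P3) y); try lra.
rewrite /slope; field; lra.
Qed.

Lemma pl_seg3 y : snd P2 <= y <= snd P3 -> pl P0 P1 P2 P3 y = fst P3 - slope P2 P3 * (snd P3 - y).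
Proof.
move=> Hy; rewrite /pl (cl_hi (snd P0) (snd P1) y) ?(cl_hi (snd P1) (snd P2) y) ?(cl_in (snd P2) (snd P3) y); try lra.
rewrite /slope; field; lra.
Qed.

Lemma seg_param (A B : R * R) y : snd A < snd B -> snd A <= y <= snd B ->
  exists t, in01 t /\ (fst A + slope A B * (y - snd A), y) = segpt A B t.
Proof.
move=> hAB Hy; exists ((y - snd A) / (snd B - snd A)); split.
- rewrite /in01; split.
  + apply: Rmult_le_pos; [lra | apply: Rlt_le; apply: Rinv_0_lt_compat; lra].
  + apply: (Rmult_le_reg_r (snd B - snd A)); first lra.
    rewrite /Rdiv Rmult_assoc Rinv_l; lra.
- rewrite /segpt /slope; f_equal; simpl; field; lra.
Qed.

Lemma pl_on y : snd P0 <= y <= snd P3 ->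
  (exists t, in01 t /\ (pl P0 P1 P2 P3 y, y) = segpt P0 P1 t) \/
  (exists t, in01 t /\ (pl P0 P1 P2 P3 y, y) = segpt P1 P2 t) \/
  (exists t, in01 t /\ (pl P0 P1 P2 P3 y, y) = segpt P2 P3 t).
Proof.
move=> Hy.
case: (Rle_lt_dec y (snd P1)) => H1.
  left; rewrite pl_seg1; last lra; apply: seg_param; lra.
case: (Rle_lt_dec y (snd P2)) => H2.
  right; left; rewrite pl_seg2; last lra; apply: seg_param; lra.
right; right; rewrite pl_seg3; last lra.
have -> : fst P3 - slope P2 P3 * (snd P3 - y) = fst P2 + slope P2 P3 * (y - snd P2).
  rewrite /slope; field; lra.
apply: seg_param; lra.
Qed.
End PL.

Lemma geo_cross (P0 P1 P2 P3 Q1 Q2 : R * R) :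
  snd P0 < snd P1 -> snd P1 < snd P2 -> snd P2 < snd P3 ->
  snd P0 < snd Q1 -> snd Q1 < snd Q2 -> snd Q2 < snd P3 ->
  slope P0 P1 <= slope P0 Q1 -> slope P2 P3 <= slope Q2 P3 ->
  exists y, snd P0 < y < snd P3 /\ pl P0 P1 P2 P3 y = pl P0 Q1 Q2 P3 y.
Proof.
move=> a1 a2 a3 b1 b2 b3 s1 s3.
set ylo := Rmin (snd P1) (snd Q1).
set yhi := Rmax (snd P2) (snd Q2).
have Hlo1 : snd P0 < ylo by rewrite /ylo; apply: Rmin_glb_lt.
have Hlo2 : ylo <= snd P1 by apply: Rmin_l.
have Hlo3 : ylo <= snd Q1 by apply: Rmin_r.
have Hhi1 : yhi < snd P3 by apply: Rmax_lub_lt.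
have Hhi2 : snd P2 <= yhi by apply: Rmax_l.
have Hhi3 : snd Q2 <= yhi by apply: Rmax_r.
set g := fun y => pl P0 P1 P2 P3 y - pl P0 Q1 Q2 P3 y.
have Eg y : g y = pl P0 P1 P2 P3 y - pl P0 Q1 Q2 P3 y by [].
have glo : g ylo <= 0.
  rewrite Eg pl_seg1 ?pl_seg1; try lra.
  have : (slope P0 P1 - slope P0 Q1) * (ylo - snd P0) <= 0 by nra.
  lra.
have ghi : 0 <= g yhi.
  rewrite Eg pl_seg3 ?pl_seg3; try lra.
  have : 0 <= (slope Q2 P3 - slope P2 P3) * (snd P3 - yhi) by nra.
  lra.
have lohi : ylo < yhi by lra.
case: (Rle_lt_or_eq_dec _ _ glo) => glo'; last first.
  exists ylo; split; [lra | rewrite Eg in glo'; lra].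
case: (Rle_lt_or_eq_dec _ _ ghi) => ghi'; last first.
  exists yhi; split; [lra | rewrite Eg in ghi'; lra].
have cg : continuity g.
  move=> x; apply: cpt_minus; [exact: pl_cont | exact: pl_cont].
case: (IVT g ylo yhi cg lohi glo' ghi') => z [Hz Hgz].
exists z; split; [lra | rewrite Eg in Hgz; lra].
Qed.
End Geo.

Section Core.
Context {disp : Order.disp_t} {D : finTBDistrLatticeType disp}.

Lemma covers_lt {x y : D} : covers x y -> x < y.
Proof. by case/andP. Qed.

Lemma core_lemma (p : D -> R * R) (Hp : planar_drawing p) (z0 x1 x2 z1 y1 y2 : D) :
  covers z0 x1 -> covers x1 x2 -> covers x2 z1 ->
  covers z0 y1 -> covers y1 y2 -> covers y2 z1 ->
  x1 <> y1 -> x1 <> y2 -> x2 <> y1 -> x2 <> y2 ->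
  Rle (slope (p z0) (p x1)) (slope (p z0) (p y1)) ->
  Rlt (slope (p y2) (p z1)) (slope (p x2) (p z1)).
Proof.
move=> c1 c2 c3 d1 d2 d3 n11 n12 n21 n22 hs.
case: Hp => [pinj [pup [pv pe]]].
have l1 := covers_lt c1; have l2 := covers_lt c2; have l3 := covers_lt c3.
have m1 := covers_lt d1; have m2 := covers_lt d2; have m3 := covers_lt d3.
have h1 := pup _ _ l1; have h2 := pup _ _ l2; have h3 := pup _ _ l3.
have k1 := pup _ _ m1; have k2 := pup _ _ m2; have k3 := pup _ _ m3.
have V1 : forall v, v = x1 \/ v = x2 -> v = z0 \/ v = y1 \/ v = y2 \/ v = z1 -> False.
  move=> v [->|->] [E|[E|[E|E]]] //.
  - by move: l1; rewrite E ltxx.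
  - by move: (lt_trans l2 l3); rewrite E ltxx.
  - by move: (lt_trans l1 l2); rewrite E ltxx.
  - by move: l3; rewrite E ltxx.
have conflict : forall a b c d t s,
    ((a = z0 /\ b = x1) \/ (a = x1 /\ b = x2) \/ (a = x2 /\ b = z1)) ->
    ((c = z0 /\ d = y1) \/ (c = y1 /\ d = y2) \/ (c = y2 /\ d = z1)) ->
    in01 t -> in01 s -> segpt (p a) (p b) t = segpt (p c) (p d) s ->
    Rlt (snd (p z0)) (snd (segpt (p a) (p b) t)) -> Rlt (snd (segpt (p a) (p b) t)) (snd (p z1)) -> False.
  move=> a b c d t s Hab Hcd Ht Hs E Hh1 Hh2.
  have cab : covers a b by case: Hab => [[-> ->]|[[-> ->]|[-> ->]]].
  have ccd : covers c d by case: Hcd => [[-> ->]|[[-> ->]|[-> ->]]].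
  have vK : forall v, v = a \/ v = b -> v = z0 \/ v = x1 \/ v = x2 \/ v = z1.
    by move=> v; case: Hab => [[-> ->]|[[-> ->]|[-> ->]]]; tauto.
  have vK' : forall v, v = c \/ v = d -> v = z0 \/ v = y1 \/ v = y2 \/ v = z1.
    by move=> v; case: Hcd => [[-> ->]|[[-> ->]|[-> ->]]]; tauto.
  case: (pe a b c d t s cab ccd Ht Hs E) => [[Eac Ebd]|[v [Hv1 [Hv2 Ev]]]].
  - case: Hab => [[Ea Eb]|[[Ea Eb]|[Ea Eb]]].
    + apply: (V1 b); [by left | apply: vK'; by right].
    + apply: (V1 a); [by left | apply: vK'; by left].
    + apply: (V1 a); [by right | apply: vK'; by left].
  - rewrite Ev in Hh1 Hh2.
    have := vK' v Hv2; have := vK v Hv1.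
    move=> [E0|[E1|[E2|E3]]].
    + by move: Hh1; rewrite E0; lra.
    + move=> H; apply: (V1 v) => //; by left.
    + move=> H; apply: (V1 v) => //; by right.
    + by move: Hh2; rewrite E3; lra.
case: (Rlt_le_dec (slope (p y2) (p z1)) (slope (p x2) (p z1))) => // hs3.
exfalso.
have [y [Hy Ey]] := @geo_cross _ _ _ _ _ _ h1 h2 h3 k1 k2 k3 hs hs3.
have hy : Rle (snd (p z0)) y /\ Rle y (snd (p z1)) by lra.
have onK := @pl_on _ _ _ _ h1 h2 h3 _ hy.
have onK' := @pl_on _ _ _ _ k1 k2 k3 _ hy.
rewrite Ey in onK.
case: onK => [[t [Ht Et]]|[[t [Ht Et]]|[t [Ht Et]]]];
case: onK' => [[s [Hs Es]]|[[s [Hs Es]]|[s [Hs Es]]]].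
all: have E := etrans (esym Et) Es.
all: apply: (conflict _ _ _ _ t s _ _ Ht Hs E); [tauto | tauto | by rewrite -Et /=; lra | by rewrite -Et /=; lra].
Qed.
End Core.

Section Lat.
Context {disp : Order.disp_t} {D : finTBDistrLatticeType disp}.
Implicit Types (x y z j a b c : D).

Lemma jirrP j : reflect (j != \bot /\ forall y z, j = y `|` z -> j = y \/ j = z) (join_irr j).
Proof.
apply: (iffP andP) => [[H1 /forallP H2]|[H1 H2]]; split => //.
- move=> y z E; have /forallP/(_ z)/implyP := H2 y.
  by rewrite E eqxx => /(_ isT) /orP [/eqP|/eqP]; [left|right].
- apply/forallP => y; apply/forallP => z; apply/implyP => /eqP /H2 [->|->].
  + by rewrite eqxx.
  + by rewrite eqxx orbT.
Qed.

Lemma jirr_neq0 {j} : join_irr j -> j != \bot.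
Proof. by case/jirrP. Qed.

Lemma jprime {j x y} : join_irr j -> j <= x `|` y -> (j <= x) \/ (j <= y).
Proof.
case/jirrP => _ H /meet_idPl E.
rewrite meetUr in E; case: (H _ _ (esym E)) => E'.
- by left; apply/meet_idPl; rewrite -E'.
- by right; apply/meet_idPl; rewrite -E'.
Qed.

Lemma jprime_big {I : eqType} {r : seq I} {P : pred I} {F : I -> D} {j} :
  join_irr j -> j <= \join_(i <- r | P i) F i -> exists i, [/\ i \in r, P i & j <= F i].
Proof.
move=> Hj; elim: r => [|i r IH].
  rewrite big_nil => H; have := jirr_neq0 Hj; by rewrite (le_anti (introT andP (conj H (le0x j)))) eqxx.
rewrite big_cons; case: ifP => Pi.
- move/(jprime Hj) => [H|H].
  + by exists i; rewrite mem_head.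
  + by case: (IH H) => k [H1 H2 H3]; exists k; rewrite in_cons H1 orbT.
- by move/IH => [k [H1 H2 H3]]; exists k; rewrite in_cons H1 orbT.
Qed.

Lemma jprime_bigf {I : finType} {P : pred I} {F : I -> D} {j} :
  join_irr j -> j <= \join_(i | P i) F i -> exists i, P i /\ j <= F i.
Proof. by move=> Hj /(jprime_big Hj) [i [_ H1 H2]]; exists i. Qed.

Definition low x : D := \join_(y | y < x) y.

Lemma lt_low x y : y < x -> y <= low x.
Proof. by move=> H; apply: (@joins_sup _ _ _ y (fun y => y < x)). Qed.

Lemma low_le x : low x <= x.
Proof. by apply/joinsP => y /ltW. Qed.

Lemma low_lt {j} : join_irr j -> low j < j.
Proof.
move=> Hj; rewrite lt_neqAle low_le andbT; apply/eqP => E.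
have : j <= low j by rewrite E.
by case/(jprime_bigf Hj) => y [Hy Hy']; move: (lt_le_trans Hy Hy'); rewrite ltxx.
Qed.

Lemma cov_add e x : join_irr x -> ~~ (x <= e) -> low x <= e -> covers e (e `|` x).
Proof.
move=> Hx nxe lxe; apply/andP; split.
  by rewrite lt_neqAle leUl andbT; apply: contra nxe => /eqP E; rewrite E leUr.
apply/forallP => z; apply/negP => /andP [ez zex].
have ez' := ltW ez; have zex' := ltW zex.
have E : z = e `|` (z `&` x).
  by rewrite -{1}(meet_idPl zex') meetUr (meet_idPr ez').
case: (boolP (x <= z)) => xz.
  by move: zex; rewrite lt_neqAle => /andP [/eqP []]; apply: le_anti; rewrite zex' leUx ez' xz.
have : z `&` x < x by rewrite lt_neqAle leIr andbT; apply: contra xz => /eqP <-; rewrite leIl.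
move=> /lt_low H.
have : z <= e by rewrite E leUx lexx (le_trans H lxe).
by move=> H'; move: ez; rewrite lt_neqAle => /andP [/eqP [] ]; apply: le_anti; rewrite H' ez'.
Qed.

End Lat.

Section Cube.
Context {disp : Order.disp_t} {D : finTBDistrLatticeType disp}.
Implicit Types (x y z j a b c : D).

Definition W2 := forall a b c : D, join_irr a -> join_irr b -> join_irr c ->
  [|| a <= b, b <= a, a <= c, c <= a, b <= c | c <= b].

Lemma nle_join x y z : join_irr x -> ~~ (x <= y) -> ~~ (x <= z) -> ~~ (x <= y `|` z).
Proof. by move=> Hx H1 H2; apply/negP => /(jprime Hx) [H|H]; [move/negP: H1|move/negP: H2]. Qed.

Lemma ne_wit {w s t : D} : w <= s -> ~~ (w <= t) -> s <> t.
Proof. by move=> H1 H2 E; move: H2; rewrite -E H1. Qed.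

Lemma planar_W2 : @planar disp D -> W2.
Proof.
case=> p Hp a b c Ha Hb Hc.
apply/negPn/negP; rewrite !negb_or => /andP [nab /andP [nba /andP [nac /andP [nca /andP [nbc ncb]]]]].
set e0 := low a `|` low b `|` low c.
have le0 : forall x, x = a \/ x = b \/ x = c -> low x <= e0.
  move=> x [->|[->|->]]; rewrite /e0.
  - apply: (le_trans (leUl _ (low b))); apply: leUl.
  - apply: (le_trans (leUr (low b) (low a))); apply: leUl.
  - exact: leUr.
have nl0 : forall x y, join_irr x -> ~~ (x <= y) -> ~~ (x <= low y).
  by move=> x y Hx H; apply: contra H => H; apply: le_trans H (low_le _).
have nlow : forall x, join_irr x -> ~~ (x <= low x).
  by move=> x Hx; apply/negP => H; move: (le_lt_trans H (low_lt Hx)); rewrite ltxx.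
have a0 : ~~ (a <= e0) by rewrite /e0 !nle_join // ?nlow ?nl0.
have b0 : ~~ (b <= e0) by rewrite /e0 !nle_join // ?nlow ?nl0.
have c0 : ~~ (c <= e0) by rewrite /e0 !nle_join // ?nlow ?nl0.
set eA := e0 `|` a. set eB := e0 `|` b. set eC := e0 `|` c.
set eAB := eA `|` b. set eAC := eA `|` c. set eBC := eB `|` c.
set e1 := eAB `|` c.
have EAB : eAB = eB `|` a by rewrite /eAB /eA /eB joinAC.
have EAC : eAC = eC `|` a by rewrite /eAC /eA /eC joinAC.
have EBC : eBC = eC `|` b by rewrite /eBC /eB /eC joinAC.
have E1a : e1 = eAC `|` b by rewrite /e1 /eAB /eAC joinAC.
have E1b : e1 = eBC `|` a by rewrite /e1 /eAB /eBC /eA /eB !(joinAC e0 a) (joinAC _ a c).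
have nA_B : ~~ (a <= eB) by apply: nle_join => //.
have nA_C : ~~ (a <= eC) by apply: nle_join => //.
have nA_BC : ~~ (a <= eBC) by apply: nle_join => //; apply: nle_join => //.
have nB_A : ~~ (b <= eA) by apply: nle_join => //.
have nB_C : ~~ (b <= eC) by apply: nle_join => //.
have nB_AC : ~~ (b <= eAC) by apply: nle_join => //; apply: nle_join => //.
have nC_A : ~~ (c <= eA) by apply: nle_join => //.
have nC_B : ~~ (c <= eB) by apply: nle_join => //.
have nC_AB : ~~ (c <= eAB) by apply: nle_join => //; apply: nle_join => //.
have lowle : forall x e, x = a \/ x = b \/ x = c -> e0 <= e -> low x <= e.
  by move=> x e Hx He; apply: le_trans (le0 x Hx) He.
have e0A : e0 <= eA by apply: leUl.
have e0B : e0 <= eB by apply: leUl.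
have e0C : e0 <= eC by apply: leUl.
have e0AB : e0 <= eAB by apply: le_trans e0A (leUl _ _).
have e0AC : e0 <= eAC by apply: le_trans e0A (leUl _ _).
have e0BC : e0 <= eBC by apply: le_trans e0B (leUl _ _).
have c0A : covers e0 eA by apply: cov_add => //; apply: lowle; [tauto | by rewrite ?lexx].
have c0B : covers e0 eB by apply: cov_add => //; apply: lowle; [tauto | by rewrite ?lexx].
have c0C : covers e0 eC by apply: cov_add => //; apply: lowle; [tauto | by rewrite ?lexx].
have cAAB : covers eA eAB by apply: cov_add => //; apply: lowle; [tauto | by rewrite ?lexx].
have cAAC : covers eA eAC by apply: cov_add => //; apply: lowle; [tauto | by rewrite ?lexx].
have cBBC : covers eB eBC by apply: cov_add => //; apply: lowle; [tauto | by rewrite ?lexx].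
have cBAB : covers eB eAB by rewrite EAB; apply: cov_add => //; apply: lowle; [tauto | by rewrite ?lexx].
have cCAC : covers eC eAC by rewrite EAC; apply: cov_add => //; apply: lowle; [tauto | by rewrite ?lexx].
have cCBC : covers eC eBC by rewrite EBC; apply: cov_add => //; apply: lowle; [tauto | by rewrite ?lexx].
have cAB1 : covers eAB e1 by apply: cov_add => //; apply: lowle; [tauto | by rewrite ?lexx].
have cAC1 : covers eAC e1 by rewrite E1a; apply: cov_add => //; apply: lowle; [tauto | by rewrite ?lexx].
have cBC1 : covers eBC e1 by rewrite E1b; apply: cov_add => //; apply: lowle; [tauto | by rewrite ?lexx].
have aA : a <= eA by apply: leUr.
have bB : b <= eB by apply: leUr.
have aAB : a <= eAB by apply: le_trans aA (leUl _ _).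
have bAB : b <= eAB by apply: leUr.
have aAC : a <= eAC by apply: le_trans aA (leUl _ _).
have cBC : c <= eBC by apply: leUr.
have core := @core_lemma _ _ p Hp.
set sA := slope (p e0) (p eA). set sB := slope (p e0) (p eB). set sC := slope (p e0) (p eC).
set tAB := slope (p eAB) (p e1). set tAC := slope (p eAC) (p e1). set tBC := slope (p eBC) (p e1).
have p1a : Rle sA sB -> Rlt tBC tAB.
  apply: core => //; [exact: (ne_wit aA) | exact: (ne_wit aA) | exact: (ne_wit aAB) | exact: (ne_wit aAB)].
have p1b : Rle sB sA -> Rlt tAB tBC.
  apply: core => //; apply: nesym; [exact: (ne_wit aA) | exact: (ne_wit aAB) | exact: (ne_wit aA) | exact: (ne_wit aAB)].
have p2a : Rle sA sB -> Rlt tAB tAC.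
  apply: core => //; [exact: (ne_wit aA) | apply: nesym; exact: (ne_wit bAB) | exact: (ne_wit aAC) | apply: nesym; exact: (ne_wit bAB)].
have p2b : Rle sB sA -> Rlt tAC tAB.
  apply: core => //; [apply: nesym; exact: (ne_wit aA) | apply: nesym; exact: (ne_wit aAC) | exact: (ne_wit bAB) | exact: (ne_wit bAB)].
have p3a : Rle sB sC -> Rlt tAC tAB.
  apply: core => //; [exact: (ne_wit bB) | exact: (ne_wit bB) | exact: (ne_wit bAB) | exact: (ne_wit bAB)].
have p3b : Rle sC sB -> Rlt tAB tAC.
  apply: core => //; apply: nesym; [exact: (ne_wit bB) | exact: (ne_wit bAB) | exact: (ne_wit bB) | exact: (ne_wit bAB)].
have p4a : Rle sB sC -> Rlt tBC tAB.
  apply: core => //; [exact: (ne_wit bB) | apply: nesym; exact: (ne_wit cBC) | exact: (ne_wit bAB) | exact: (ne_wit aAB)].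
have p4b : Rle sC sB -> Rlt tAB tBC.
  apply: core => //; [apply: nesym; exact: (ne_wit bB) | apply: nesym; exact: (ne_wit bAB) | exact: (ne_wit cBC) | apply: nesym; exact: (ne_wit aAB)].
case: (Rle_dec sA sB) => h1; case: (Rle_dec sB sC) => h2.
- have := p1a h1; have := p2a h1; have := p3a h2; lra.
- have := p1a h1; have := p2a h1; have := p3b ltac:(lra); lra.
- have := p1b ltac:(lra); have := p2b ltac:(lra); have := p3a h2; have := p4a h2; lra.
- have := p1b ltac:(lra); have := p2b ltac:(lra); have := p3b ltac:(lra); lra.
Qed.
End Cube.

Section Rep.
Context {disp : Order.disp_t} {D : finTBDistrLatticeType disp}.
Context {n : nat} (sigma : 'I_n -> D).

Definition sgn (k : nat) : D := oapp sigma \bot (insub k).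

Lemma sgnE (o : 'I_n) : sgn o = sigma o.
Proof. by rewrite /sgn valK. Qed.

Lemma repE i j : rep sigma i j = \join_(k < n | (i <= k)%N && (k < j)%N) sgn k.
Proof. by apply: eq_bigr => k _; rewrite sgnE. Qed.

Lemma rep_le i j u : (forall k, (i <= k)%N -> (k < j)%N -> (k < n)%N -> sgn k <= u) -> rep sigma i j <= u.
Proof.
move=> H; rewrite repE; apply/joinsP => k /andP [H1 H2]; exact: H.
Qed.

Lemma le_rep i j k : (i <= k)%N -> (k < j)%N -> (k < n)%N -> sgn k <= rep sigma i j.
Proof.
move=> H1 H2 H3; rewrite repE.
have -> : k = Ordinal H3 by [].
by apply: (@joins_sup _ _ _ (Ordinal H3) (fun k : 'I_n => (i <= k)%N && (k < j)%N)); rewrite /= H1 H2.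
Qed.

Lemma rep_nil i : rep sigma i i = \bot.
Proof. apply/le_anti; rewrite le0x andbT; apply: rep_le => k H1 H2; by move: (leq_ltn_trans H1 H2); rewrite ltnn. Qed.

Lemma rep_mono i j i' j' : (i' <= i)%N -> (j <= j')%N -> rep sigma i j <= rep sigma i' j'.
Proof.
move=> H1 H2; apply: rep_le => k Hk1 Hk2 Hk3; apply: le_rep => //.
- exact: leq_trans H1 Hk1.
- exact: leq_trans Hk2 H2.
Qed.

Lemma rep_stepr i j : (i <= j)%N -> (j < n)%N -> rep sigma i j.+1 = rep sigma i j `|` sgn j.
Proof.
move=> H1 H2; apply/le_anti/andP; split.
- apply: rep_le => k Hk1 Hk2 Hk3; rewrite ltnS leq_eqVlt in Hk2; case/orP: Hk2 => [/eqP ->|Hk2].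
  + exact: leUr.
  + apply: le_trans (leUl _ _); exact: le_rep.
- rewrite leUx; apply/andP; split; first by apply: rep_mono.
  by apply: le_rep.
Qed.

Lemma rep_stepl i j : (i < j)%N -> (j <= n)%N -> rep sigma i j = sgn i `|` rep sigma i.+1 j.
Proof.
move=> H1 H2; apply/le_anti/andP; split.
- apply: rep_le => k Hk1 Hk2 Hk3; rewrite leq_eqVlt in Hk1; case/orP: Hk1 => [/eqP <-|Hk1].
  + exact: leUl.
  + apply: le_trans (leUr _ _); exact: le_rep.
- rewrite leUx; apply/andP; split; last by apply: rep_mono.
  by apply: le_rep => //; exact: leq_trans H1 H2.
Qed.

Lemma RepP x : reflect (exists i j, [/\ (i <= j)%N, (j <= n)%N & x = rep sigma i j]) (x \in Rep sigma).
Proof.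
apply: (iffP idP).
- rewrite inE => /existsP [i /existsP [j /andP [H /eqP E]]].
  by exists i, j; split => //; rewrite -ltnS.
- move=> [i [j [H1 H2 E]]]; rewrite inE; apply/existsP.
  have Hi : (i < n.+1)%N by rewrite ltnS (leq_trans H1 H2).
  have Hj : (j < n.+1)%N by rewrite ltnS.
  exists (Ordinal Hi); apply/existsP; exists (Ordinal Hj); by rewrite /= H1 E eqxx.
Qed.

End Rep.

Section Fcr.
Context {disp : Order.disp_t} {D : finTBDistrLatticeType disp}.
Implicit Types (x y z j a b c d : D).

Lemma JplusE x : (x \in Jplus) = [|| x == \bot, x == \top | join_irr x].
Proof. by rewrite /Jplus /Jset !inE. Qed.

Lemma le_bot {x} : x <= \bot -> x = \bot.
Proof. by move=> H; apply/le_anti; rewrite H le0x. Qed.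

Lemma fcr_W2 : @fully_chain_representable disp D -> @W2 disp D.
Proof.
move=> F a b c Ha Hb Hc; apply/negPn/negP.
rewrite !negb_or => /andP [nab /andP [nba /andP [nac /andP [nca /andP [nbc ncb]]]]].
set abc := a `|` b `|` c.
have aabc : a <= abc by apply: le_trans (leUl a b) (leUl _ c).
have babc : b <= abc by apply: le_trans (leUr b a) (leUl _ c).
have cabc : c <= abc by apply: leUr.
have two : forall z, join_irr z -> z <= abc ->
    (a <= z /\ b <= z) \/ (a <= z /\ c <= z) \/ (b <= z /\ c <= z) -> False.
  move=> z Hz Hzle H.
  have : z <= a \/ z <= b \/ z <= c.
    case/(jprime Hz): Hzle => [/(jprime Hz) [H1|H1]|H1]; tauto.
  case=> [za|[zb|zc]]; case: H => [[H1 H2]|[[H1 H2]|[H1 H2]]].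
  - by move/negP: nba; apply; apply: le_trans H2 za.
  - by move/negP: nca; apply; apply: le_trans H2 za.
  - by move/negP: nba; apply; apply: le_trans H1 za.
  - by move/negP: nab; apply; apply: le_trans H1 zb.
  - by move/negP: nab; apply; apply: le_trans H1 zb.
  - by move/negP: ncb; apply; apply: le_trans H2 zb.
  - by move/negP: nac; apply; apply: le_trans H1 zc.
  - by move/negP: nac; apply; apply: le_trans H1 zc.
  - by move/negP: nbc; apply; apply: le_trans H1 zc.
have abc_not : forall u v, (u = \bot \/ join_irr u) -> join_irr v -> abc = u `|` v -> False.
  move=> u v Hu Hv E.
  have side : forall x, join_irr x -> x <= abc -> (x <= u /\ join_irr u) \/ x <= v.
    move=> x Hx; rewrite E => /(jprime Hx) [H|H]; last by right.
    case: Hu => [Eu|Hu]; last by left.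
    by move: (jirr_neq0 Hx); rewrite Eu in H; rewrite (le_bot H) eqxx.
  have uabc : u <= abc by rewrite E leUl.
  have vabc : v <= abc by rewrite E leUr.
  case: (side a Ha aabc) => [[A1 Hu']|A2]; case: (side b Hb babc) => [[B1 Hu2]|B2];
  case: (side c Hc cabc) => [[C1 Hu3]|C2].
  all: try by apply: (two v) => //; tauto.
  all: try by apply: (two u) => //; tauto.
set Q := Jplus :|: [set abc].
case: (F Q (subsetUl _ _)) => n [sigma [[colJ colS] EQ]].
have sgJ : forall k, (k < n)%N -> join_irr (sgn sigma k).
  move=> k Hk; have -> : k = Ordinal Hk by [].
  by rewrite sgnE; have := colJ (Ordinal Hk); rewrite /Jset inE.
have H : forall L i, (i + L <= n)%N -> rep sigma i (i + L) != abc.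
  elim => [|L IH] i HiL.
    rewrite addn0 rep_nil; apply/eqP => E.
    have : a <= \bot by rewrite E.
    by move/le_bot => Ea; move: (jirr_neq0 Ha); rewrite Ea eqxx.
  have Hl : (i + L < n)%N by rewrite -addnS.
  rewrite addnS rep_stepr ?leq_addr //.
  set w := rep sigma i (i + L).
  have wQ : w \in Q by rewrite EQ; apply/RepP; exists i, (i + L); rewrite leq_addr (ltnW Hl).
  apply/eqP => E.
  have wle : w <= abc by rewrite -E leUl.
  have wne := IH i (ltnW Hl).
  move: wQ; rewrite /Q inE JplusE inE (negbTE wne) orbF => /orP [/eqP wb|/orP [/eqP wt|wj]].
  - by apply: (abc_not w (sgn sigma (i + L))) => //; [left | apply: sgJ].
  - have h : abc <= w by rewrite wt lex1.
    by move/eqP: wne; apply; apply/le_anti; rewrite wle h.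
  - by apply: (abc_not w (sgn sigma (i + L))) => //; [right | apply: sgJ].
have : abc \in Rep sigma by rewrite -EQ !inE eqxx orbT.
case/RepP => i [j [H1 H2 E]].
move: (H (j - i)%N i); rewrite subnKC // H2 E => /(_ isT).
by rewrite eqxx.
Qed.


Lemma coatom_lt {c} : coatom c -> c < \top.
Proof. by case/andP. Qed.

Lemma coatom_max {c y} : coatom c -> c < y -> y = \top.
Proof.
move=> /andP [H1 /forallP H2] Hy; apply/le_anti; rewrite lex1 /=.
case: (boolP (y < \top)) => [Hyt|]; first by move: (H2 y); rewrite Hy Hyt.
by rewrite lt_neqAle lex1 andbT negbK => /eqP ->.
Qed.

Lemma jred_neq0 {c} : join_red c -> c != \bot.
Proof.
case/existsP => y /existsP [z /and3P [Hy _ _]]; apply/eqP => E.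
by move: Hy; rewrite E ltx0.
Qed.

Lemma jred_nirr {c} : join_red c -> ~~ join_irr c.
Proof.
case/existsP => y /existsP [z /and3P [Hy Hz /eqP E]]; apply/negP => /jirrP [_ H].
by case: (H _ _ E) => E'; [move: Hy | move: Hz]; rewrite -E' ltxx.
Qed.

Lemma fcr_coat : @fully_chain_representable disp D ->
  forall c1 c2 : D, coatom c1 -> join_red c1 -> coatom c2 -> join_red c2 -> c1 = c2.
Proof.
move=> F c1 c2 C1 R1 C2 R2; apply/eqP/negPn/negP => ne.
set d := c1 `&` c2.
have c1t := coatom_lt C1; have c2t := coatom_lt C2.
have c12 : c1 `|` c2 = \top.
  apply: (coatom_max C1); rewrite lt_neqAle leUl andbT; apply/negP => /eqP E.
  have : c2 <= c1 by rewrite E leUr.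
  rewrite le_eqVlt => /orP [/eqP E'|H]; first by move: ne; rewrite E' eqxx.
  by move: c1t; rewrite (coatom_max C2 H) ltxx.
have split : forall x, join_irr x -> x <= c1 \/ x <= c2.
  by move=> x Hx; apply: (jprime Hx); rewrite c12 lex1.
set Q := Jplus :|: [set d].
have bad : forall c c', coatom c -> coatom c' -> join_red c -> c != c' ->
    (c \in Jplus \/ c = c `&` c') -> False.
  move=> c c' Cc Cc' Rc ncc' [].
  - rewrite JplusE => /orP [/eqP E|/orP [/eqP E|E]].
    + by move: (jred_neq0 Rc); rewrite E eqxx.
    + by move: (coatom_lt Cc); rewrite E ltxx.
    + by move: (jred_nirr Rc); rewrite E.
  - move=> E; have : c <= c' by rewrite E leIr.
    rewrite le_eqVlt => /orP [/eqP E'|H]; first by move: ncc'; rewrite E' eqxx.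
    by move: (coatom_lt Cc'); rewrite (coatom_max Cc H) ltxx.
have ext : forall x, join_irr x -> ~~ (x <= d) -> d `|` x \in Q -> False.
  move=> x Hx nxd dxQ.
  case: (split x Hx) => xc.
  - have nxc2 : ~~ (x <= c2) by apply: contra nxd => h; rewrite lexI xc h.
    have c2x : c2 `|` x = \top.
      apply: (coatom_max C2); rewrite lt_neqAle leUl andbT; apply: contra nxc2 => /eqP E.
      by rewrite E leUr.
    have Ec1 : c1 = d `|` x.
      by rewrite -{1}(meet_l (lex1 c1)) -c2x meetUr /d (meet_r xc).
    apply: (bad c1 c2) => //; move: dxQ; rewrite -Ec1 /Q inE => /orP [H|/set1P H]; tauto.
  - have nxc1 : ~~ (x <= c1) by apply: contra nxd => h; rewrite lexI xc h.
    have c1x : c1 `|` x = \top.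
      apply: (coatom_max C1); rewrite lt_neqAle leUl andbT; apply: contra nxc1 => /eqP E.
      by rewrite E leUr.
    have Ec2 : c2 = d `|` x.
      by rewrite -{1}(meet_l (lex1 c2)) -c1x meetUr /d meetC (meet_r xc).
    apply: (bad c2 c1) => //; first by rewrite eq_sym.
    move: dxQ; rewrite -Ec2 /Q inE => /orP [H|/set1P H]; first tauto.
    by right; rewrite {1}H meetC.
case: (F Q (subsetUl _ _)) => n [sigma [[colJ colS] EQ]].
have sgJ : forall k, (k < n)%N -> join_irr (sgn sigma k).
  move=> k Hk; have -> : k = Ordinal Hk by [].
  by rewrite sgnE; have := colJ (Ordinal Hk); rewrite /Jset inE.
have repQ : forall i j : nat, (i <= j)%N -> (j <= n)%N -> rep sigma i j \in Q.
  by move=> i j H1 H2; rewrite EQ; apply/RepP; exists i, j.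
have : \top \in Rep sigma by rewrite -EQ !inE eqxx !orbT.
case/RepP => i0 [j0 [_ Hj0 Et]].
have H : forall k L i, (n - L)%N = k -> (i + L <= n)%N -> rep sigma i (i + L) != d.
  elim => [|k IH] L i Hk HiL; apply/eqP => E.
  - have EL : L = n by apply/eqP; rewrite eqn_leq (leq_trans (leq_addl _ _) HiL) -subn_eq0 Hk.
    have Ei : i = 0%N by move: HiL; rewrite EL -{2}(add0n n) leq_add2r leqn0 => /eqP.
    have : rep sigma i0 j0 <= rep sigma i (i + L) by apply: rep_mono => //; rewrite Ei ?EL.
    rewrite -Et E => h.
    by move: c1t; rewrite lt_neqAle => /andP [/eqP []]; apply/le_anti; rewrite lex1 (le_trans h (leIl _ _)).
  - have Ln : (L < n)%N by rewrite -subn_gt0 Hk.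
    have Hk' : (n - L.+1)%N = k by rewrite subnS Hk.
    case: (ltnP (i + L) n) => Hr.
    + have E2 : rep sigma i (i + L.+1) = d `|` sgn sigma (i + L) by rewrite addnS rep_stepr ?leq_addr // E.
      case: (boolP (sgn sigma (i + L) <= d)) => hle.
      * by move: (IH L.+1 i Hk' ltac:(by rewrite addnS)); rewrite E2 (join_l hle) eqxx.
      * apply: (ext _ (sgJ _ Hr) hle); rewrite -E2; apply: repQ; [exact: leq_addr | by rewrite addnS].
    + have Ei : (0 < i)%N by lia.
      have Hin : (i.-1 < n)%N by lia.
      have E2 : rep sigma i.-1 (i.-1 + L.+1) = d `|` sgn sigma i.-1.
        have -> : (i.-1 + L.+1 = i + L)%N by lia.
        rewrite rep_stepl; [|lia|lia].
        have -> : (i.-1.+1 = i)%N by lia.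
        by rewrite E joinC.
      case: (boolP (sgn sigma i.-1 <= d)) => hle.
      * by move: (IH L.+1 i.-1 Hk' ltac:(lia)); rewrite E2 (join_l hle) eqxx.
      * apply: (ext _ (sgJ _ Hin) hle); rewrite -E2; apply: repQ; lia.
have : d \in Rep sigma by rewrite -EQ !inE eqxx orbT.
case/RepP => i [j [H1 H2 E]].
move: (H (n - (j - i))%N (j - i)%N i erefl); rewrite subnKC // H2 -E => /(_ isT).
by rewrite eqxx.
Qed.

End Fcr.

Section Constr.
Context {disp : Order.disp_t} {D : finTBDistrLatticeType disp}.
Implicit Types (x y z j a b c d : D).

Lemma lt_ind (P : D -> Prop) : (forall x, (forall y, y < x -> P y) -> P x) -> forall x, P x.
Proof.
move=> H x.
set cnt := fun x : D => #|[set y : D | y < x]|.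
have [m Hm] : exists m, (cnt x < m)%N by exists (cnt x).+1.
elim: m x Hm => [|m IH] x Hm //.
apply: H => y yx; apply: IH.
have : [set z | z < y] \proper [set z | z < x].
  apply/properP; split.
  - by apply/subsetP => z; rewrite !inE => zy; exact: lt_trans zy yx.
  - by exists y; rewrite !inE ?yx ?ltxx.
move/proper_card => h; rewrite /cnt in Hm *; apply: leq_trans h _; by rewrite -ltnS.
Qed.

Lemma ex_maxim (P : pred D) x0 : P x0 -> exists m, [/\ P m, x0 <= m & forall y, P y -> ~~ (m < y)].
Proof.
move=> H.
case: (@arg_maxnP D x0 (fun y => P y && (x0 <= y)) (fun y => #|[set z | z <= y]|)).
  by rewrite H lexx.
move=> m /andP [Pm xm] Hmax; exists m; split => // y Py; apply/negP => my.
have := Hmax y; rewrite Py (le_trans xm (ltW my)) => /(_ isT) h.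
have : [set z | z <= m] \proper [set z | z <= y].
  apply/properP; split.
  - by apply/subsetP => z; rewrite !inE => zm; exact: le_trans zm (ltW my).
  - by exists y; rewrite !inE ?lexx ?(lt_geF my).
move/proper_card => h'; lia.
Qed.

Lemma coatom_above {x} : x < \top -> exists c, coatom c /\ x <= c.
Proof.
move=> H; case: (@ex_maxim (fun y => y < \top) x H) => m [Pm xm Hm].
exists m; split => //; apply/andP; split => //; apply/forallP => z; apply/negP => /andP [mz zt].
by move: (Hm z zt); rewrite mz.
Qed.

Lemma notjr_irr {c} : c != \bot -> ~~ join_red c -> join_irr c.
Proof.
move=> Hc H; apply/jirrP; split => // y z E.
case: (eqVneq c y) => [->|ny]; first by left.
case: (eqVneq c z) => [->|nz]; first by right.
exfalso; move/negP: H; apply; apply/existsP; exists y; apply/existsP; exists z.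
rewrite -E eqxx andbT !lt_neqAle (eq_sym y) (eq_sym z) ny nz /=.
by rewrite E leUl leUr.
Qed.

Lemma sep_exists :
  (forall c1 c2 : D, coatom c1 -> join_red c1 -> coatom c2 -> join_red c2 -> c1 = c2) ->
  (\bot : D) != \top ->
  exists s, join_irr s /\ forall j, join_irr j -> j <= s \/ s `|` j = \top.
Proof.
move=> HC Hnt.
case: (boolP (join_irr (\top : D))) => Ht.
  by exists \top; split => // j _; left; exact: lex1.
move: Ht; rewrite /join_irr (eq_sym \top) Hnt /= => /forallPn [y /forallPn [z]].
rewrite negb_imply negb_or => /andP [/eqP E /andP [ny nz]].
have yt : y < \top by rewrite lt_neqAle eq_sym ny lex1.
have zt : z < \top by rewrite lt_neqAle eq_sym nz lex1.
case: (coatom_above yt) => cy [Cy ycy].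
case: (coatom_above zt) => cz [Cz zcz].
have ne : cy != cz.
  apply/eqP => Ec; move: (coatom_lt Cy); rewrite lt_neqAle => /andP [/eqP []].
  by apply/le_anti; rewrite lex1 E leUx ycy Ec zcz.
have [c [Cc Rc Hc]] : exists c, [/\ coatom c, ~~ join_red c & (y <= c \/ z <= c)].
  case: (boolP (join_red cy)) => jy; last by exists cy; split => //; left.
  case: (boolP (join_red cz)) => jz; last by exists cz; split => //; right.
  by move: ne; rewrite (HC _ _ Cy jy Cz jz) eqxx.
have cb : c != \bot.
  apply/eqP => Eb; case: Hc; rewrite Eb => /le_bot Eb'.
  - by move: nz; rewrite E Eb' join0x eqxx.
  - by move: ny; rewrite E Eb' joinx0 eqxx.
exists c; split; first exact: notjr_irr.
move=> j Hj; case: (boolP (j <= c)) => hj; first by left.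
right; apply: (coatom_max Cc); rewrite lt_neqAle leUl andbT.
by apply: contra hj => /eqP ->; rewrite leUr.
Qed.

Lemma red3 : @W2 disp D -> forall a b c, join_irr a -> join_irr b -> join_irr c ->
  exists u v, [/\ join_irr u, join_irr v & a `|` b `|` c = u `|` v].
Proof.
move=> HW a b c Ha Hb Hc.
case/or4P: (HW a b c Ha Hb Hc) => [h|h|h|/orP [h|/orP [h|h]]].
- by exists b, c; rewrite (join_r h).
- by exists a, c; rewrite (join_l h).
- by exists c, b; rewrite joinAC (join_r h).
- by exists a, b; rewrite joinAC (join_l h).
- by exists a, c; rewrite -joinA (join_r h).
- by exists a, b; rewrite -joinA (join_l h).
Qed.

Lemma dec2 : @W2 disp D -> forall x, x != \bot ->
  exists a b, [/\ join_irr a, join_irr b & x = a `|` b].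
Proof.
move=> HW; apply: lt_ind => x IH Hx.
case: (boolP (join_irr x)) => Hj; first by exists x, x; rewrite joinxx.
move: Hj; rewrite /join_irr Hx /= => /forallPn [y /forallPn [z]].
rewrite negb_imply negb_or => /andP [/eqP E /andP [ny nz]].
have yx : y < x by rewrite lt_neqAle eq_sym ny E leUl.
have zx : z < x by rewrite lt_neqAle eq_sym nz E leUr.
have yb : y != \bot by apply: contra nz => /eqP Eb; rewrite E Eb join0x.
have zb : z != \bot by apply: contra ny => /eqP Eb; rewrite E Eb joinx0.
case: (IH y yx yb) => a1 [b1 [Ha1 Hb1 Ey]].
case: (IH z zx zb) => a2 [b2 [Ha2 Hb2 Ez]].
case: (red3 HW _ _ _ Ha1 Hb1 Ha2) => u [v [Hu Hv Euv]].
case: (red3 HW _ _ _ Hu Hv Hb2) => u' [v' [Hu' Hv' Euv']].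
by exists u', v'; rewrite E Ey Ez joinA Euv Euv'.
Qed.

End Constr.

Section Build.
Context {disp : Order.disp_t} {D : finTBDistrLatticeType disp}.
Implicit Types (x y z j a b c d : D).
Variables (s : D) (Hs : join_irr s)
  (Hsep : forall j, join_irr j -> j <= s \/ s `|` j = \top)
  (HW : @W2 disp D) (Q : {set D}) (HQ : Jplus \subset Q).

Let JQ x : join_irr x -> x \in Q.
Proof. by move=> H; apply: (subsetP HQ); rewrite JplusE H !orbT. Qed.
Let botQ : \bot \in Q.
Proof. by apply: (subsetP HQ); rewrite JplusE eqxx. Qed.
Let topQ : \top \in Q.
Proof. by apply: (subsetP HQ); rewrite JplusE eqxx orbT. Qed.

Definition pr (q : D) : D * D :=
  if [pick ab : D * D | [&& join_irr ab.1, join_irr ab.2 & q == ab.1 `|` ab.2]] is Some ab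
  then ab else (s, s).

Lemma pr_J q : join_irr (pr q).1 /\ join_irr (pr q).2.
Proof. by rewrite /pr; case: pickP => [ab /and3P [H1 H2 _]|_]. Qed.

Lemma pr_eq {q} : q != \bot -> q = (pr q).1 `|` (pr q).2.
Proof.
move=> Hq; rewrite /pr; case: pickP => [ab /and3P [_ _ /eqP //]|H].
case: (dec2 HW _ Hq) => a [b [Ha Hb E]].
by move: (H (a, b)); rewrite /= Ha Hb E eqxx.
Qed.

Lemma pr_join q : q \in Q -> (pr q).1 `|` (pr q).2 \in Q.
Proof.
move=> Hq; rewrite /pr; case: pickP => [ab /and3P [_ _ /eqP <- //]|H] /=.
by rewrite joinxx; apply: JQ.
Qed.

Let qs := enum Q.
Let m := size qs.
Definition col (k : nat) : D :=
  if (k %% 3 == 0)%N then s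
  else if (k %% 3 == 1)%N then (pr (nth \bot qs (k %/ 3))).1
  else (pr (nth \bot qs (k %/ 3))).2.

Lemma col_J k : join_irr (col k).
Proof. rewrite /col; case: ifP => // _; case: ifP => _; apply pr_J. Qed.

Let n := (3 * m).+1.
Definition sig (k : 'I_n) : D := col k.

Lemma sgn_col k : (k < n)%N -> sgn sig k = col k.
Proof. by move=> Hk; have -> : k = Ordinal Hk by []; rewrite sgnE. Qed.

Lemma rep1 i : (i < n)%N -> rep sig i i.+1 = col i.
Proof. by move=> H; rewrite rep_stepr // rep_nil join0x sgn_col. Qed.

Lemma rep2 i : (i.+1 < n)%N -> rep sig i i.+2 = col i `|` col i.+1.
Proof. by move=> H; rewrite rep_stepr // rep1 ?sgn_col //; lia. Qed.

Lemma col_1 t : col (3 * t + 1) = (pr (nth \bot qs t)).1.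
Proof.
rewrite /col; have -> : ((3 * t + 1) %% 3 = 1)%N by lia.
by have -> : ((3 * t + 1) %/ 3 = t)%N by lia.
Qed.

Lemma col_2 t : col (3 * t + 2) = (pr (nth \bot qs t)).2.
Proof.
rewrite /col; have -> : ((3 * t + 2) %% 3 = 2)%N by lia.
by have -> : ((3 * t + 2) %/ 3 = t)%N by lia.
Qed.

Lemma nthQ t : (t < m)%N -> nth \bot qs t \in Q.
Proof. by move=> H; rewrite -mem_enum; apply: mem_nth. Qed.

Lemma build : chain_representable Q.
Proof.
exists n, sig; split; first split.
- by move=> k; rewrite /Jset inE col_J.
- move=> x; rewrite /Jset inE => Hx.
  have xQ := JQ _ Hx.
  have Ht : (index x qs < m)%N by rewrite index_mem mem_enum.
  set t := index x qs in Ht *.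
  have Ex : nth \bot qs t = x by rewrite nth_index // mem_enum.
  case/jirrP: (Hx) => Hb Hirr.
  case: (Hirr _ _ (pr_eq Hb)) => E.
  + have Hk : (3 * t + 1 < n)%N by rewrite /n; lia.
    by exists (Ordinal Hk); rewrite /sig /= col_1 Ex.
  + have Hk : (3 * t + 2 < n)%N by rewrite /n; lia.
    by exists (Ordinal Hk); rewrite /sig /= col_2 Ex.
- apply/setP => x; apply/idP/idP => [xQ|/RepP [i [j [Hij Hjn ->]]]].
  + apply/RepP; case: (eqVneq x \bot) => [->|Hb].
      by exists 0%N, 0%N; rewrite rep_nil.
    have Ht : (index x qs < m)%N by rewrite index_mem mem_enum.
    set t := index x qs in Ht *.
    have Ex : nth \bot qs t = x by rewrite nth_index // mem_enum.
    exists (3 * t + 1)%N, (3 * t + 3)%N; split; [lia | rewrite /n; lia |].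
    have -> : (3 * t + 3 = (3 * t + 1).+2)%N by lia.
    rewrite rep2; last by rewrite /n; lia.
    have -> : ((3 * t + 1).+1 = 3 * t + 2)%N by lia.
    by rewrite col_1 col_2 Ex -pr_eq.
  + case: (boolP [exists k : 'I_n, [&& (i <= k)%N, (k < j)%N & (k %% 3 == 0)%N]]).
    * case/existsP => k /and3P [k1 k2 k3].
      have sr : s <= rep sig i j.
        have := le_rep sig _ _ _ k1 k2 (ltn_ord k); rewrite sgn_col // /col k3 //.
      case: (boolP [exists k' : 'I_n, [&& (i <= k')%N, (k' < j)%N & ~~ (col k' <= s)]]).
      - case/existsP => k' /and3P [k1' k2' k3'].
        have cr : col k' <= rep sig i j by have := le_rep sig _ _ _ k1' k2' (ltn_ord k'); rewrite sgn_col.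
        case: (Hsep _ (col_J k')) => h; first by rewrite h in k3'.
        have -> : rep sig i j = \top by apply/le_anti; rewrite lex1 -h leUx sr cr.
        exact: topQ.
      - move/existsPn => H.
        have -> : rep sig i j = s.
          apply/le_anti; rewrite sr andbT; apply: rep_le => k' h1 h2 h3.
          rewrite sgn_col //; have := H (Ordinal h3); rewrite /= h1 h2 /= negbK //.
        exact: JQ.
    * move/existsPn => H.
      have nz : forall k, (i <= k)%N -> (k < j)%N -> (k %% 3 != 0)%N.
        move=> k h1 h2; have h3 : (k < n)%N by lia.
        by have := H (Ordinal h3); rewrite /= h1 h2.
      case: (ltnP i j) => hij; last first.
        have -> : j = i by lia.
        by rewrite rep_nil.
      have hi := nz i (leqnn i) hij.
      case: (ltnP i.+1 j) => hij2; last first.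
        have -> : j = i.+1 by lia.
        by rewrite rep1; [apply: JQ; apply: col_J | lia].
      have hi1 := nz i.+1 (leqnSn i) hij2.
      have hj : j = i.+2.
        case: (ltnP i.+2 j) => h3; last by lia.
        have := nz i.+2 (leqW (leqnSn i)) h3; lia.
      rewrite hj rep2; last by lia.
      have Ht : (i %/ 3 < m)%N by rewrite /n in Hjn; lia.
      have -> : i = (3 * (i %/ 3) + 1)%N by lia.
      have -> : ((3 * (i %/ 3) + 1).+1 = 3 * (i %/ 3) + 2)%N by lia.
      rewrite col_1 col_2; apply: pr_join; exact: nthQ.
Qed.

End Build.

Section Dil.
Context {disp : Order.disp_t} {D : finTBDistrLatticeType disp}.
Implicit Types (x y z j a b c d : D).

Definition Jb x : {set D} := [set j | join_irr j && (j <= x)].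

Lemma elem_join x : x = \join_(j in Jb x) j.
Proof.
elim/(@lt_ind disp D): x => x IH; apply/le_anti/andP; split; last first.
  by apply/joinsP => j; rewrite inE => /andP [].
case: (eqVneq x \bot) => [->|Hx]; first exact: le0x.
case: (boolP (join_irr x)) => Hj.
  by apply: (@joins_sup _ _ _ x (fun j => j \in Jb x)); rewrite inE Hj lexx.
move: Hj; rewrite /join_irr Hx /= => /forallPn [y /forallPn [z]].
rewrite negb_imply negb_or => /andP [/eqP E /andP [ny nz]].
have yx : y < x by rewrite lt_neqAle eq_sym ny E leUl.
have zx : z < x by rewrite lt_neqAle eq_sym nz E leUr.
have sub : forall w, w <= x -> Jb w \subset Jb x.
  move=> w wx; apply/subsetP => j; rewrite !inE => /andP [-> jw]; exact: le_trans jw wx.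
rewrite {1}E leUx (IH y yx) (IH z zx).
by rewrite !le_joins // sub // ltW.
Qed.

Lemma Jb_le {x y} : x <= y -> Jb x \subset Jb y.
Proof. move=> xy; apply/subsetP => j; rewrite !inE => /andP [-> jx]; exact: le_trans jx xy. Qed.

Lemma Jb_inj {x y} : Jb x = Jb y -> x = y.
Proof. by move=> E; rewrite (elem_join x) (elem_join y) E. Qed.

Lemma Jb_lt {x y} : x < y -> Jb x \proper Jb y.
Proof.
move=> xy; rewrite properEneq Jb_le ?ltW // andbT; apply/eqP => E.
by move: xy; rewrite (Jb_inj E) ltxx.
Qed.

Lemma cover_J a b : covers a b -> exists j, [/\ join_irr j, ~~ (j <= a), j <= b &
  forall k, join_irr k -> (k <= b) = (k <= a) || (k == j)].
Proof.
move=> C; have ab := covers_lt C.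
case/properP: (Jb_lt ab) => _ [j]; rewrite !inE => /andP [Hj jb] /nandP [|ja]; first by rewrite Hj.
have Eb : forall k, join_irr k -> k <= b -> ~~ (k <= a) -> a `|` k = b.
  move=> k Hk kb ka; move: C => /andP [_ /forallP /(_ (a `|` k))].
  rewrite negb_and => /orP [H|H].
  - by exfalso; move: H; rewrite lt_neqAle leUl andbT negbK => /eqP E; move: ka; rewrite E leUr.
  - by apply/eqP; move: H; rewrite lt_neqAle negb_and negbK leUx (ltW ab) kb orbF eq_sym.
exists j; split => // k Hk.
apply/idP/idP => [kb|/orP [ka|/eqP ->//]]; last exact: le_trans ka (ltW ab).
case: (boolP (k <= a)) => //= ka.
have E1 := Eb k Hk kb ka; have E2 := Eb j Hj jb ja.
have kj : k <= j by move: kb; rewrite -E2 => /(jprime Hk) [h|h] //; rewrite h in ka.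
have jk : j <= k by move: jb; rewrite -E1 => /(jprime Hj) [h|h] //; rewrite h in ja.
by rewrite (le_anti (introT andP (conj kj jk))).
Qed.


Definition chainS (C : {set D}) := forall x y, x \in C -> y \in C -> (x <= y) || (y <= x).
Definition W2S (S : {set D}) := forall a b c, a \in S -> b \in S -> c \in S ->
  [|| a <= b, b <= a, a <= c, c <= a, b <= c | c <= b].

Lemma chain_max {X : {set D}} {x y} : chainS X -> x \in X -> y \in X -> ~~ (x < y) -> y <= x.
Proof.
move=> CX xX yX nxy; case/orP: (CX x y xX yX) => // h.
by move: nxy; rewrite lt_neqAle h andbT negbK => /eqP ->.
Qed.

Lemma dilworth2 (S : {set D}) : W2S S -> exists C1 C2, [/\ chainS C1, chainS C2 & S = C1 :|: C2].
Proof.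
have [k Hk] : exists k, (#|S| < k)%N by exists #|S|.+1.
elim: k S Hk => [|k IH] S Hk HS //.
case: (set_0Vmem S) => [->|[mm0 Hmm0]].
  by exists set0, set0; split => //; [move=> x y; rewrite inE | move=> x y; rewrite inE | rewrite setU0].
case: (@ex_maxim disp D (fun y => y \in S) mm0 Hmm0) => mm [mmS _ mmax].
set S' := S :\ mm.
have S'S : S' \subset S by apply: subD1set.
have HS' : W2S S' by move=> a b c ha hb hc; apply: HS; apply: (subsetP S'S).
have HkS' : (#|S'| < k)%N by move: Hk; rewrite (cardsD1 mm S) mmS.
case: (IH S' HkS' HS') => A [B [CA CB ES']].
set anti := fun u v => [&& u \in S', v \in S', ~~ (u <= v) & ~~ (v <= u)].
set T := [set u | [exists v, anti u v]].
have antiT : forall u v, anti u v -> u \in T /\ v \in T.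
  move=> u v h; split; rewrite inE; apply/existsP; [by exists v|exists u].
  by move: h; rewrite /anti => /and4P [-> -> -> ->].
have other : forall X Y u v, chainS X -> S' = X :|: Y -> anti u v -> u \in X -> v \in Y.
  move=> X Y u v CX E /and4P [uS vS nuv nvu] uX.
  move: vS; rewrite E inE => /orP [vX|//].
  by move: (CX u v uX vX); rewrite (negbTE nuv) (negbTE nvu).
have finish : forall X Y x, chainS X -> chainS Y -> S' = X :|: Y -> x \in T :&: X ->
    (forall y, y \in T :&: X -> y <= x) -> x <= mm ->
    exists C1 C2, [/\ chainS C1, chainS C2 & S = C1 :|: C2].
  move=> X Y x CX CY E xTX maxx xm.
  set K := mm |: [set z in X | z <= x].
  have KS : K \subset S.
    apply/subsetP => z; rewrite !inE => /orP [/eqP ->//|/andP [zX _]].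
    by apply: (subsetP S'S); rewrite E inE zX.
  exists K, (S :\: K); split.
  - move=> z1 z2; rewrite !inE => /orP [/eqP ->|/andP [z1X z1x]] /orP [/eqP ->|/andP [z2X z2x]].
    + by rewrite lexx.
    + by rewrite (le_trans z2x xm) orbT.
    + by rewrite (le_trans z1x xm).
    + exact: CX.
  - move=> u1 u2; rewrite !inE => /andP [u1K u1S] /andP [u2K u2S].
    apply/negPn/negP; rewrite negb_or => /andP [n12 n21].
    have u1S' : u1 \in S' by rewrite !inE u1S andbT; apply: contra u1K => /eqP ->; rewrite eqxx.
    have u2S' : u2 \in S' by rewrite !inE u2S andbT; apply: contra u2K => /eqP ->; rewrite eqxx.
    have an : anti u1 u2 by rewrite /anti u1S' u2S' n12 n21.
    have an' : anti u2 u1 by rewrite /anti u1S' u2S' n12 n21.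
    case: (antiT _ _ an) => T1 T2.
    move: (u1S'); rewrite E inE => /orP [u1X|u1Y].
    + have := maxx u1; rewrite in_setI T1 u1X => /(_ isT) h.
      by move: u1K; rewrite u1X h orbT.
    + have u2X : u2 \in X.
        move: (u2S'); rewrite E inE => /orP [//|u2Y].
        by move: (CY u1 u2 u1Y u2Y); rewrite (negbTE n12) (negbTE n21).
      have := maxx u2; rewrite in_setI T2 u2X => /(_ isT) h.
      by move: u2K; rewrite u2X h orbT.
  - apply/setP => z; rewrite in_setU in_setD; case: (boolP (z \in K)) => zK //=.
    by rewrite (subsetP KS z zK).
case: (boolP (T == set0)) => [/eqP T0|Tn0].
  exists S', [set mm]; split => //.
  - move=> u v uS vS; apply/negPn/negP; rewrite negb_or => /andP [n1 n2].
    have : u \in T by case: (antiT u v); rewrite /anti ?uS ?vS ?n1 ?n2.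
    by rewrite T0 inE.
  - by move=> u v; rewrite !inE => /eqP -> /eqP ->; rewrite lexx.
  - by rewrite setUC -(setD1K mmS).
case/set0Pn: Tn0 => u; rewrite inE => /existsP [v uv].
have TX : forall X Y, chainS X -> chainS Y -> S' = X :|: Y -> exists w, w \in T :&: X.
  move=> X Y CX CY E; case: (antiT _ _ uv) => uT vT.
  have uS : u \in S' by move: uv => /and4P [].
  have vS : v \in S' by move: uv => /and4P [].
  move: (uS); rewrite E inE => /orP [uX|uY]; first by exists u; rewrite in_setI uT uX.
  exists v; rewrite in_setI vT.
  move: (vS); rewrite E inE => /orP [//|vY].
  by move: uv (CY u v uY vY) => /and4P [_ _ /negbTE -> /negbTE ->].
case: (TX A B CA CB ES') => a0 a0T.
case: (TX B A CB CA ltac:(by rewrite setUC)) => b0 b0T.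
case: (@ex_maxim disp D (fun y => y \in T :&: A) a0 a0T) => xA [xAT _ xAm].
case: (@ex_maxim disp D (fun y => y \in T :&: B) b0 b0T) => xB [xBT _ xBm].
have maxA : forall y, y \in T :&: A -> y <= xA.
  move=> y yT; apply: (chain_max CA); [by move: xAT; rewrite in_setI => /andP [] | by move: yT; rewrite in_setI => /andP [] | exact: xAm].
have maxB : forall y, y \in T :&: B -> y <= xB.
  move=> y yT; apply: (chain_max CB); [by move: xBT; rewrite in_setI => /andP [] | by move: yT; rewrite in_setI => /andP [] | exact: xBm].
have incomp : forall X Y x y, chainS X -> S' = X :|: Y -> x \in T :&: X ->
    (forall w, w \in T :&: Y -> w <= y) -> ~~ (y <= x).
  move=> X Y x y CX E xT H; apply/negP => yx.
  move: xT; rewrite in_setI => /andP [xT xX].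
  move: xT; rewrite inE => /existsP [w xw].
  have wY := other X Y x w CX E xw xX.
  case: (antiT _ _ xw) => _ wT.
  have := H w; rewrite in_setI wT wY => /(_ isT) wy.
  by move: xw => /and4P [_ _ _ /negP []]; apply: le_trans wy yx.
have ES'' : S' = B :|: A by rewrite setUC.
have nBA := incomp A B xA xB CA ES' xAT maxB.
have nAB := incomp B A xB xA CB ES'' xBT maxA.
have inS' : forall y X Y, S' = X :|: Y -> y \in T :&: X -> y \in S'.
  by move=> y X Y E; rewrite in_setI => /andP [_ yX]; rewrite E in_setU yX.
have xAS' := inS' _ _ _ ES' xAT.
have xBS' := inS' _ _ _ ES'' xBT.
have xAS : xA \in S by apply: (subsetP S'S).
have xBS : xB \in S by apply: (subsetP S'S).
have neA : mm != xA by move: xAS'; rewrite !inE eq_sym => /andP [].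
have neB : mm != xB by move: xBS'; rewrite !inE eq_sym => /andP [].
have nle : forall y, y \in S -> mm != y -> ~~ (mm <= y).
  by move=> y yS ne; apply: contra (mmax y yS) => h; rewrite lt_neqAle ne h.
case/or4P: (HS mm xA xB mmS xAS xBS) => [h|h|h|/orP [h|/orP [h|h]]].
- by move: (nle xA xAS neA); rewrite h.
- exact: (finish A B xA CA CB ES' xAT maxA h).
- by move: (nle xB xBS neB); rewrite h.
- exact: (finish B A xB CB CA ES'' xBT maxB h).
- by rewrite h in nAB.
- by rewrite h in nBA.
Qed.

End Dil.

Section Grid.
Local Open Scope R_scope.

Lemma INR_bounds (m k : nat) : INR m <= INR k + 1 -> (m <= k.+1)%N.
Proof. by move=> H; rewrite -S_INR in H; have := INR_le _ _ H; lia. Qed.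

Lemma INR_inj (m k : nat) : INR m = INR k -> m = k.
Proof. exact: INR_eq. Qed.

Lemma int01 {m k : nat} {t} : INR m = INR k + t -> in01 t -> (m = k /\ t = 0) \/ (m = k.+1 /\ t = 1).
Proof.
move=> E [t0 t1].
have h1 : (m <= k.+1)%N by apply: INR_bounds; lra.
have h2 : (k <= m.+1)%N by apply: INR_bounds; lra.
have h3 : (k <= m)%N.
  have : INR k <= INR m by lra.
  by move/INR_le; lia.
have [em|em] : m = k \/ m = k.+1 by lia.
- by subst m; left; split => //; lra.
- by subst m; right; split => //; rewrite S_INR in E; lra.
Qed.

Lemma int_diff {m k : nat} {t s} : INR m + t = INR k + s -> in01 t -> in01 s ->
  (m = k /\ t = s) \/ (k = m.+1 /\ t = 1 /\ s = 0) \/ (m = k.+1 /\ t = 0 /\ s = 1).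
Proof.
move=> E [t0 t1] [s0 s1].
have h1 : (m <= k.+1)%N by apply: INR_bounds; lra.
have h2 : (k <= m.+1)%N by apply: INR_bounds; lra.
have [em|[em|em]] : m = k \/ k = m.+1 \/ m = k.+1 by lia.
- by subst m; left; split => //; lra.
- by subst k; right; left; rewrite S_INR in E; split => //; lra.
- by subst m; right; right; rewrite S_INR in E; split => //; lra.
Qed.

Definition step (ua va ub vb : nat) : Prop := (ub = ua.+1 /\ vb = va) \/ (ub = ua /\ vb = va.+1).

Lemma grid_v (ua va ub vb uw vw : nat) t : step ua va ub vb -> in01 t ->
  INR uw = INR ua + t * (INR ub - INR ua) -> INR vw = INR va + t * (INR vb - INR va) ->
  (uw = ua /\ vw = va) \/ (uw = ub /\ vw = vb).
Proof.
move=> [[-> ->]|[-> ->]] Ht E1 E2; rewrite ?S_INR in E1 E2.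
- have E2' : vw = va by apply: INR_inj; lra.
  have E1' : INR uw = INR ua + t by lra.
  case: (int01 E1' Ht) => [[-> _]|[-> _]]; [left|right]; by [].
- have E1' : uw = ua by apply: INR_inj; lra.
  have E2' : INR vw = INR va + t by lra.
  case: (int01 E2' Ht) => [[-> _]|[-> _]]; [left|right]; by [].
Qed.

Lemma grid_e (ua va ub vb uc vc ud vd : nat) t s :
  step ua va ub vb -> step uc vc ud vd -> in01 t -> in01 s ->
  INR ua + t * (INR ub - INR ua) = INR uc + s * (INR ud - INR uc) ->
  INR va + t * (INR vb - INR va) = INR vc + s * (INR vd - INR vc) ->
  (ua = uc /\ va = vc /\ ub = ud /\ vb = vd) \/
  (t = 0 /\ ((ua = uc /\ va = vc) \/ (ua = ud /\ va = vd))) \/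
  (t = 1 /\ ((ub = uc /\ vb = vc) \/ (ub = ud /\ vb = vd))).
Proof.
move=> [[-> ->]|[-> ->]] [[-> ->]|[-> ->]] Ht Hs E1 E2; rewrite ?S_INR in E1 E2.
- have ev : va = vc by apply: INR_inj; lra.
  have E : INR ua + t = INR uc + s by lra.
  case: (int_diff E Ht Hs) => [[eu et]|[[eu [et es]]|[eu [et es]]]].
  + by left; subst; split.
  + by right; right; split => //; left; subst.
  + by right; left; split => //; right; subst.
- have E1' : INR uc = INR ua + t by lra.
  have E2' : INR va = INR vc + s by lra.
  case: (int01 E1' Ht) => [[eu et]|[eu et]]; case: (int01 E2' Hs) => [[ev es]|[ev es]]; subst.
  + by right; left; split => //; left.
  + by right; left; split => //; right.
  + by right; right; split => //; left.
  + by right; right; split => //; right.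
- have E1' : INR ua = INR uc + s by lra.
  have E2' : INR vc = INR va + t by lra.
  case: (int01 E1' Hs) => [[eu es]|[eu es]]; case: (int01 E2' Ht) => [[ev et]|[ev et]]; subst.
  + by right; left; split => //; left.
  + by right; right; split => //; left.
  + by right; left; split => //; right.
  + by right; right; split => //; right.
- have eu : ua = uc by apply: INR_inj; lra.
  have E : INR va + t = INR vc + s by lra.
  case: (int_diff E Ht Hs) => [[ev et]|[[ev [et es]]|[ev [et es]]]].
  + by left; subst; split.
  + by right; right; split => //; left; subst.
  + by right; left; split => //; right; subst.
Qed.

End Grid.

Section Draw.
Context {disp : Order.disp_t} {D : finTBDistrLatticeType disp}.
Implicit Types (x y z j a b c d : D).

Definition pre (X : {set D}) x : {set D} := [set j in X | j <= x].

Lemma pre_cmp X x y : chainS X -> pre X x \subset pre X y \/ pre X y \subset pre X x.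
Proof.
move=> CX; case: (boolP (pre X x \subset pre X y)) => h; first by left.
right; case/subsetPn: h => j; rewrite !inE => /andP [jX jx] /nandP [/negP //|njy].
apply/subsetP => k; rewrite !inE => /andP [kX ky]; rewrite kX /=.
case/orP: (CX j k jX kX) => h; first by move: njy; rewrite (le_trans h ky).
exact: le_trans h jx.
Qed.

Lemma pre_eq {X x y} : chainS X -> #|pre X x| = #|pre X y| -> pre X x = pre X y.
Proof.
move=> CX E; case: (pre_cmp X x y CX) => h.
- by apply/eqP; rewrite eqEcard h E leqnn.
- by apply/eqP; rewrite eq_sym eqEcard h E leqnn.
Qed.

Lemma pre_mono {X x y} : x <= y -> pre X x \subset pre X y.
Proof. by move=> xy; apply/subsetP => j; rewrite !inE => /andP [-> jx]; exact: le_trans jx xy. Qed.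

Variables (C1 C2 : {set D}) (CC1 : chainS C1) (CC2 : chainS C2) (EJ : Jset = C1 :|: C2).

Let C2' := C2 :\: C1.
Let CC2' : chainS C2'.
Proof. by move=> x y; rewrite !inE => /andP [_ hx] /andP [_ hy]; exact: CC2. Qed.

Definition uu x := #|pre C1 x|.
Definition vv x := #|pre C2' x|.

Lemma Jb_split x : Jb x = pre C1 x :|: pre C2' x.
Proof.
apply/setP => j; rewrite !inE.
have : join_irr j = (j \in C1) || (j \in C2) by rewrite -in_setU -EJ /Jset inE.
move=> ->; case: (j \in C1); case: (j \in C2) => //=; by rewrite ?andbF ?orbF.
Qed.

Lemma uv_inj x y : uu x = uu y -> vv x = vv y -> x = y.
Proof.
move=> E1 E2; apply: Jb_inj; rewrite !Jb_split.
by rewrite (pre_eq CC1 E1) (pre_eq CC2' E2).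
Qed.

Lemma uv_lt x y : x < y -> (uu x + vv x < uu y + vv y)%N.
Proof.
move=> xy; case/properP: (Jb_lt xy) => _ [j]; rewrite !Jb_split !inE.
have m1 := subset_leq_card (@pre_mono C1 _ _ (ltW xy)).
have m2 := subset_leq_card (@pre_mono C2' _ _ (ltW xy)).
move=> /orP [/andP [jC jy]|/andP [jC jy]] /norP [/nandP [nj|nj] /nandP [nj'|nj']].
all: try by move: nj; rewrite jC.
all: try by move: nj'; rewrite jC.
all: try (have p : pre C1 x \proper pre C1 y;
  [apply/properP; split; [exact: pre_mono (ltW xy) | by exists j; rewrite !inE ?jC ?jy // negb_and nj orbT] |
   have := proper_card p; rewrite /uu /vv; lia]).
all: try (have p : pre C2' x \proper pre C2' y;
  [apply/properP; split; [exact: pre_mono (ltW xy) | by exists j; rewrite !inE ?jC ?jy // negb_and nj' orbT] |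
   have := proper_card p; rewrite /uu /vv; lia]).
Qed.


Lemma C_irr k : (k \in C1) || (k \in C2) -> join_irr k.
Proof. move=> h; have : k \in Jset by rewrite EJ inE. by rewrite /Jset inE. Qed.

Lemma cover_uv {a b} : covers a b -> step (uu a) (vv a) (uu b) (vv b).
Proof.
case/cover_J => j [Hj nja jb Hk].
have preb : forall X : {set D}, (forall k, k \in X -> join_irr k) ->
    pre X b = if j \in X then j |: pre X a else pre X a.
  move=> X HX; apply/setP => k.
  case: (eqVneq k j) => [->|nkj].
    case: (boolP (j \in X)) => jX; rewrite !inE ?eqxx ?jX ?jb //=.
    by rewrite (negbTE jX).
  have rhs : (k \in (if j \in X then j |: pre X a else pre X a)) = (k \in X) && (k <= a).
    by case: (j \in X); rewrite !inE ?(negbTE nkj).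
  rewrite rhs inE; case: (boolP (k \in X)) => kX //=.
  by rewrite (Hk k (HX k kX)) (negbTE nkj) orbF.
have H1 : forall k, k \in C1 -> join_irr k by move=> k h; apply: C_irr; rewrite h.
have H2 : forall k, k \in C2' -> join_irr k by move=> k; rewrite inE => /andP [_ h]; apply: C_irr; rewrite h orbT.
have nja' : forall X, j \notin pre X a by move=> X; rewrite inE negb_and nja orbT.
have : (j \in C1) || (j \in C2) by rewrite -in_setU -EJ /Jset inE.
case/orP => jC.
- left; rewrite /uu /vv (preb _ H1) (preb _ H2) jC inE jC /= cardsU1 nja'; split => //.
- case: (boolP (j \in C1)) => jC1.
    left; rewrite /uu /vv (preb _ H1) (preb _ H2) jC1 inE jC1 /= cardsU1 nja'; split => //.
  right; rewrite /uu /vv (preb _ H1) (preb _ H2) (negbTE jC1) inE jC1 jC /= cardsU1 nja'; split => //.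
Qed.


Definition pdraw (x : D) : R * R :=
  (Rminus (INR (uu x)) (INR (vv x)), Rplus (INR (uu x)) (INR (vv x))).

Lemma seg0 (P Q : R * R) : segpt P Q 0 = P.
Proof. by case: P => x y; rewrite /segpt /=; f_equal; ring. Qed.
Lemma seg1 (P Q : R * R) : segpt P Q 1 = Q.
Proof. by case: Q => x y; rewrite /segpt /=; f_equal; ring. Qed.

Lemma pdraw_ok : planar_drawing pdraw.
Proof.
split; [|split; [|split]].
- move=> x y; rewrite /pdraw => [[E1 E2]].
  apply: uv_inj; apply: INR_inj; lra.
- move=> x y /uv_lt h; rewrite /pdraw /= -!plus_INR; apply: lt_INR; lia.
- move=> w a b t Cab Ht; rewrite /pdraw /segpt /= => [[E1 E2]].
  have F1 : INR (uu w) = Rplus (INR (uu a)) (Rmult t (Rminus (INR (uu b)) (INR (uu a)))) by lra.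
  have F2 : INR (vv w) = Rplus (INR (vv a)) (Rmult t (Rminus (INR (vv b)) (INR (vv a)))) by lra.
  case: (grid_v _ _ _ _ _ _ _ (cover_uv Cab) Ht F1 F2) => [[e1 e2]|[e1 e2]]; [left|right]; exact: uv_inj.
- move=> a b c d t s Cab Ccd Ht Hs E.
  have E' := E; move: E'; rewrite /pdraw /segpt /= => [[E1 E2]].
  have F1 : Rplus (INR (uu a)) (Rmult t (Rminus (INR (uu b)) (INR (uu a)))) = Rplus (INR (uu c)) (Rmult s (Rminus (INR (uu d)) (INR (uu c)))) by lra.
  have F2 : Rplus (INR (vv a)) (Rmult t (Rminus (INR (vv b)) (INR (vv a)))) = Rplus (INR (vv c)) (Rmult s (Rminus (INR (vv d)) (INR (vv c)))) by lra.
  case: (grid_e _ _ _ _ _ _ _ _ _ _ (cover_uv Cab) (cover_uv Ccd) Ht Hs F1 F2) => [[e1 [e2 [e3 e4]]]|[[et H]|[et H]]].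
  + by left; split; apply: uv_inj.
  + right; exists a; split; first by left.
    split; last by rewrite et; f_equal; ring.
    by case: H => [[e1 e2]|[e1 e2]]; [left|right]; apply: uv_inj.
  + right; exists b; split; first by right.
    split; last by rewrite et; f_equal; ring.
    by case: H => [[e1 e2]|[e1 e2]]; [left|right]; apply: uv_inj.
Qed.

End Draw.

Lemma W2_planar {disp : Order.disp_t} {D : finTBDistrLatticeType disp} : @W2 disp D -> @planar disp D.
Proof.
move=> HW.
have : W2S (@Jset disp D).
  by move=> a b c; rewrite /Jset !inE => ha hb hc; apply: HW.
case/dilworth2 => C1 [C2 [CC1 CC2 EJ]].
by exists (pdraw C1 C2); apply: pdraw_ok.
Qed.

Theorem proposition1p5 (disp : Order.disp_t) (D : finTBDistrLatticeType disp) :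
  @fully_chain_representable disp D <->
  (@planar disp D /\
   (forall c1 c2 : D, coatom c1 -> join_red c1 -> coatom c2 -> join_red c2 -> c1 = c2)).
Proof.
split.
- move=> F; split; [apply: W2_planar; exact: fcr_W2 | exact: fcr_coat].
- case=> P HC Q HQ.
  case: (eqVneq (\bot : D) \top) => [Ebt|Hnt].
    exists 0%N, (fun _ : 'I_0 => \bot); split; first split.
    + by case.
    + move=> x; rewrite /Jset inE => Hx; exfalso.
      have : x <= \bot by rewrite Ebt lex1.
      by move/le_bot => Ex; move: (jirr_neq0 Hx); rewrite Ex eqxx.
    + apply/setP => x.
      have -> : x = \bot by apply: le_bot; rewrite Ebt lex1.
      have -> : (\bot : D) \in Q by apply: (subsetP HQ); rewrite JplusE eqxx.
      by symmetry; apply/RepP; exists 0%N, 0%N; rewrite rep_nil.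
  case: (sep_exists HC Hnt) => s [Hs Hsep].
  exact: (build _ Hs Hsep (planar_W2 P) _ HQ).
Qed.
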